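(* Let $a \geq 1$ and consider the scalar system $X_{n+1} = a X_n + Z_n - U_n$, $n=1,2,\ldots$, where $X_1, Z_1, Z_2, \ldots$ are independent real random variables and $X_1$ has a probability density. If an $M$-bin causal quantizer-controller makes the system stabilizable in probability, i.e. there is a bounded interval $\mathcal I \subset \mathbb{R}$ with $\limsup_{n\to\infty} \mathbb{P}[X_n \in \mathcal I] > 0$, then $M \geq \lceil a \rceil$.
   Context: An $M$-bin causal quantizer-controller is a sequence $\{\mathsf f_n, \mathsf g_n\}_{n=1}^\infty$ of (measurable) maps $\mathsf f_n \colon \mathbb{R}^n \to [M] = \{1,\ldots,M\}$ and $\mathsf g_n \colon [M]^n \to \mathbb{R}$; the control at time $n$ is $U_n = \mathsf g_n(\mathsf f_1(X_1), \mathsf f_2(X_1,X_2), \ldots, \mathsf f_n(X_1,\ldots,X_n))$. *)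

(* Defs.v *)
From HB Require Import structures.
From mathcomp Require Import all_boot all_order all_algebra.
From mathcomp Require Import all_classical all_reals.
From mathcomp Require Import ereal topology normedtype sequences measure
  lebesgue_measure lebesgue_integral probability.
Set Implicit Arguments. Unset Strict Implicit. Unset Printing Implicit Defensive.
Import Order.TTheory GRing.Theory Num.Theory.
Local Open Scope classical_set_scope.
Local Open Scope ring_scope.

(* Time is indexed from 0: our index k corresponds to the paper's time k+1. *)

Definition mutually_independent d (T : measurableType d) (R : realType)
  (P : probability T R) (W : nat -> T -> R) : Prop :=
  forall (s : seq nat) (B : nat -> set R), uniq s ->
    (forall i, measurable (B i)) ->
    P (\bigcap_(i in [set` s]) (W i @^-1` B i)) =
    (\prod_(i <- s) P (W i @^-1` B i))%E.

Definition has_density d (T : measurableType d) (R : realType)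
  (P : probability T R) (X : T -> R) : Prop :=
  exists f : R -> R, measurable_fun setT f /\ (forall x, 0 <= f x) /\
    forall A : set R, measurable A ->
      P (X @^-1` A) = (\int[lebesgue_measure]_(x in A) (f x)%:E)%E.

(* Measurability of an encoder R^(n+1) -> [M] (discrete sigma-algebra on [M]). *)
Definition measurable_encoder (R : realType) (M n : nat)
  (f : (n.+1).-tuple R -> 'I_M) : Prop :=
  forall k : 'I_M, measurable [set x : (n.+1).-tuple R | f x = k].

(* Joint history of states (x_0, ..., x_n) and quantizer outputs
   (q_0, ..., q_n), with q_k = f_k(x_0..x_k), u_k = g_k(q_0..q_k) and
   x_{k+1} = a x_k + z_k - u_k. *)
Fixpoint history (R : realType) (M : nat) (a : R)
  (f : forall n : nat, (n.+1).-tuple R -> 'I_M)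
  (g : forall n : nat, (n.+1).-tuple 'I_M -> R)
  (x0 : R) (z : nat -> R) (n : nat) : (n.+1).-tuple R * (n.+1).-tuple 'I_M :=
  match n with
  | 0 => let s := [tuple x0] in (s, [tuple f 0 s])
  | m.+1 =>
      let sc := history a f g x0 z m in
      let x := a * tnth sc.1 ord_max + z m - g m sc.2 in
      let s' := [tuple of rcons sc.1 x] in
      (s', [tuple of rcons sc.2 (f m.+1 s')])
  end.

Definition state d (T : measurableType d) (R : realType) (M : nat) (a : R)
  (f : forall n : nat, (n.+1).-tuple R -> 'I_M)
  (g : forall n : nat, (n.+1).-tuple 'I_M -> R)
  (X1 : T -> R) (Z : nat -> T -> R) (n : nat) (w : T) : R :=
  tnth (history a f g (X1 w) (fun k => Z k w) n).1 ord_max.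

(* Main.v *)
Require Import Defs.
From HB Require Import structures.
From mathcomp Require Import all_boot all_order all_algebra.
From mathcomp Require Import all_classical all_reals.
From mathcomp Require Import ereal topology normedtype sequences measure
  lebesgue_measure lebesgue_integral probability charge measurable_realfun.
From mathcomp Require Import ring lra.
Set Implicit Arguments. Unset Strict Implicit. Unset Printing Implicit Defensive.
Import Order.TTheory GRing.Theory Num.Theory.
Local Open Scope classical_set_scope.
Local Open Scope ring_scope.

Lemma tnth_rcons_last (R : Type) n (s : n.-tuple R) x :
  tnth [tuple of rcons s x] ord_max = x.
Proof. by rewrite (tnth_nth x) /= nth_rcons size_tuple ltnn eqxx. Qed.

Lemma tnth_rcons_lt (R : Type) n (s : n.-tuple R) x (i : 'I_n.+1) (h : (i < n)%N) :
  tnth [tuple of rcons s x] i = tnth s (Ordinal h).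
Proof. by rewrite (tnth_nth x) /= nth_rcons size_tuple h (tnth_nth x). Qed.

Definition trunc (R : Type) n (t : (n.+1).-tuple R) : n.-tuple R :=
  [tuple tnth t (widen_ord (leqnSn n) i) | i < n].

Lemma truncK (R : Type) n (s : n.-tuple R) x : trunc [tuple of rcons s x] = s.
Proof.
apply: eq_from_tnth => i; rewrite tnth_mktuple.
have h : (widen_ord (leqnSn n) i < n)%N := ltn_ord i.
rewrite (tnth_rcons_lt _ _ h); congr tnth; exact: val_inj.
Qed.

Lemma rcons_eqE (R : Type) n (t : (n.+1).-tuple R) (s : n.-tuple R) (x : R) :
  ([tuple of rcons s x] = t) <-> (s = trunc t /\ x = tnth t ord_max).
Proof.
split.
  by move=> <-; rewrite truncK tnth_rcons_last.
move=> [-> ->]; apply: eq_from_tnth => i.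
have [h|h] := ltnP i n.
  rewrite (tnth_rcons_lt _ _ h) tnth_mktuple; congr tnth; exact: val_inj.
have -> : i = ord_max by apply: val_inj => /=; apply/eqP; rewrite eqn_leq h -ltnS ltn_ord.
by rewrite tnth_rcons_last.
Qed.

Unset Implicit Arguments.
Section Ctx.
Context d (T : measurableType d) (R : realType) (P : probability T R) (a : R)
  (X1 : {RV P >-> R}) (Z : nat -> {RV P >-> R}) (M : nat)
  (f : forall n : nat, (n.+1).-tuple R -> 'I_M)
  (g : forall n : nat, (n.+1).-tuple 'I_M -> R).
Hypothesis fm : forall n : nat, measurable_encoder (f n).

Definition hx n w := (history a f g (X1 w) (fun k => Z k w) n).1.
Definition hq n w := (history a f g (X1 w) (fun k => Z k w) n).2.
Definition st n w := state a f g X1 (fun k => Z k) n w.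

Lemma stE n w : st n w = tnth (hx n w) ord_max. Proof. by []. Qed.

Lemma hxS n w : hx n.+1 w = [tuple of rcons (hx n w) (a * st n w + Z n w - g n (hq n w))].
Proof. by []. Qed.

Lemma hqS n w : hq n.+1 w = [tuple of rcons (hq n w) (f n.+1 (hx n.+1 w))].
Proof. by []. Qed.

Lemma st0 w : st 0 w = X1 w. Proof. by []. Qed.

Lemma stS n w : st n.+1 w = a * st n w + Z n w - g n (hq n w).
Proof. by rewrite stE hxS tnth_rcons_last. Qed.

Lemma mfun_fin (F : finType) (h : T -> F) (G : F -> R) :
  (forall y, measurable (h @^-1` [set y])) -> measurable_fun setT (G \o h).
Proof.
move=> hy _ B mB; rewrite setTI.
have -> : (G \o h) @^-1` B = \big[setU/set0]_(y <- enum F | `[< B (G y) >]) (h @^-1` [set y]).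
  apply/seteqP; split => w /=.
    move=> Bw; rewrite -bigcup_seq_cond; exists (h w) => //=.
    by rewrite mem_enum /=; exact/asboolP.
  rewrite -bigcup_seq_cond => -[y /= /andP[_ /asboolP By] ->]; exact: By.
by apply: bigsetU_measurable => y _; exact: hy.
Qed.

Lemma meas_hist n : measurable_fun setT (hx n) /\
  forall t, measurable (hq n @^-1` [set t]).
Proof.
elim: n => [|n [mx mq]].
  have mx : measurable_fun setT (hx 0).
    apply/measurable_fun_tnthP => i.
    rewrite (_ : _ \o _ = X1) //; apply/funext => w /=.
    by rewrite (tnth_nth 0) /=; case: i => -[].
  split => // t.
  have -> : hq 0 @^-1` [set t] = hx 0 @^-1` [set x | f 0 x = tnth t ord0].
    apply/seteqP; split => w /=.
      move=> <-; rewrite /hq /hx /=.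
      by rewrite [RHS](tnth_nth (f 0 [tuple X1 w])).
    move=> h; apply: eq_from_tnth => i; rewrite /hq /= [LHS](tnth_nth (tnth t ord0)) /=.
    case: i => -[] //= i0; rewrite h; congr tnth; exact: val_inj.
  by rewrite -[X in measurable X]setTI; apply: mx => //; exact: fm.
have mg : measurable_fun setT (fun w => g n (hq n w)).
  exact: (mfun_fin _ (hq n) (g n) mq).
have mst : measurable_fun setT (st n).
  by move/measurable_fun_tnthP : mx => /(_ ord_max).
have mx' : measurable_fun setT (hx n.+1).
  apply/measurable_fun_tnthP => i.
  have [h|h] := ltnP i n.+1.
    rewrite (_ : _ \o _ = (fun w => tnth (hx n w) (Ordinal h))).
      by move/measurable_fun_tnthP : mx => /(_ (Ordinal h)).
    by apply/funext => w /=; rewrite hxS (tnth_rcons_lt _ _ h).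
  have -> : i = ord_max by apply: val_inj => /=; apply/eqP; rewrite eqn_leq h -ltnS ltn_ord.
  rewrite (_ : _ \o _ = (fun w => a * st n w + Z n w - g n (hq n w))).
    apply: measurable_funB => //; apply: measurable_funD => //.
    exact: measurable_funM.
  by apply/funext => w /=; rewrite hxS tnth_rcons_last.
split => // t.
have -> : hq n.+1 @^-1` [set t] = hq n @^-1` [set trunc t] `&`
    hx n.+1 @^-1` [set x | f n.+1 x = tnth t ord_max].
  apply/seteqP; split => w /=.
    by rewrite hqS => /rcons_eqE [-> ->].
  by move=> [h1 h2]; rewrite hqS; apply/rcons_eqE.
apply: measurableI => //.
by rewrite -[X in measurable X]setTI; apply: mx' => //; exact: fm.
Qed.

Lemma meas_st n B : measurable B -> measurable (st n @^-1` B).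
Proof.
move=> mB; have [mx _] := meas_hist n.
move/measurable_fun_tnthP : mx => /(_ ord_max) mst.
by rewrite -[X in measurable X]setTI; exact: mst.
Qed.


Fixpoint sf (zz : nat -> R) n := if n is m.+1 then a * sf zz m + zz m.+1 else zz 0%N.
Fixpoint af n := if n is m.+1 then a * af m + 1 else 1.

Lemma closed n : exists C : (n.+1).-tuple 'I_M -> R, forall w,
  st n.+1 w = a ^+ n.+1 * X1 w + sf (fun k => Z k w) n - C (hq n w).
Proof.
elim: n => [|n [C HC]].
  by exists (g 0%N) => w; rewrite stS st0 expr1.
exists (fun t => a * C (trunc t) + g n.+1 t) => w.
rewrite stS HC hqS truncK /= !exprS. ring.
Qed.

Lemma af_ge1 n : 0 <= a -> 1 <= af n.
Proof.
move=> a0; elim: n => [|n IH] //=.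
by rewrite lerDr mulr_ge0 // (le_trans _ IH).
Qed.

Lemma sf_bound (zz lo : nat -> R) (dl : R) n : 0 <= a ->
  (forall k, (k <= n)%N -> lo k <= zz k <= lo k + dl) ->
  sf lo n <= sf zz n <= sf lo n + dl * af n.
Proof.
move=> a0; elim: n => [|n IH] H /=.
  by rewrite mulr1; exact: H.
have /andP[l u] := IH (fun k hk => H k (leqW hk)).
have /andP[l1 u1] := H n.+1 (leqnn _).
have h1 := ler_wpM2l a0 l; have h2 := ler_wpM2l a0 u.
apply/andP; split; first by lra.
rewrite mulrDr in h2; rewrite mulrDr mulr1 mulrCA; lra.
Qed.

Definition cell (z : int) (dl : R) : set R :=
  [set` Interval (BLeft (z%:~R * dl)) (BLeft ((z + 1)%:~R * dl))].

Lemma cellP z dl x : 0 < dl -> (cell z dl x <-> Num.floor (x / dl) = z).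
Proof.
move=> d0; rewrite /cell /= in_itv /=.
rewrite -ler_pdivlMr // -ltr_pdivrMr //.
by split => [h|h]; [apply/eqP; rewrite floor_eq | move/eqP: h; rewrite floor_eq].
Qed.


Hypothesis a1 : 1 <= a.
Hypothesis indep :
  mutually_independent P (fun i => if i is k.+1 then (Z k : T -> R) else X1).

Let W : nat -> T -> R := fun i => if i is k.+1 then (Z k : T -> R) else X1.

Lemma in_iota_set i m : (i < m)%N -> [set` iota 0 m] i.
Proof. by move=> h; rewrite /= mem_iota. Qed.
Lemma iota_set_in i m : [set` iota 0 m] i -> (i < m)%N.
Proof. by rewrite /= mem_iota. Qed.

Section FixN.
Variable n : nat.
Variables (c e : R).
Let dl := (af n)^-1.
Let dl0 : 0 < dl.
Proof. by rewrite invr_gt0 (lt_le_trans ltr01) // af_ge1 // (le_trans ler01). Qed.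
Let dlaf : dl * af n = 1.
Proof. by rewrite mulVf // gt_eqF // (lt_le_trans ltr01) // af_ge1 // (le_trans ler01). Qed.

Definition rnd w : (n.+1).-tuple int := [tuple Num.floor (Z i w / dl) | i < n.+1].

Definition Bx (A : set R) (j : (n.+1).-tuple int) (i : nat) : set R :=
  if i is k.+1 then cell (nth 0 j k) dl else A.

Lemma nth_rnd w k : (k < n.+1)%N -> nth 0 (rnd w) k = Num.floor (Z k w / dl).
Proof.
move=> hk; rewrite -[k]/(nat_of_ord (Ordinal hk)) -tnth_nth tnth_mktuple //.
Qed.

Lemma rect_eq A j :
  \bigcap_(i in [set` iota 0 n.+2]) (W i @^-1` Bx A j i) = X1 @^-1` A `&` rnd @^-1` [set j].
Proof.
apply/seteqP; split => w.
  move=> H; split; first by apply: (H 0%N); apply: in_iota_set.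
  apply: eq_from_tnth => i; rewrite tnth_mktuple.
  have := H i.+1 (in_iota_set _ _ (ltn_ord i : (i.+1 < n.+2)%N)).
  by move/(cellP _ _ _ dl0) => ->; rewrite (tnth_nth 0).
move=> [XA Ew] i /(iota_set_in _ _) hi.
case: i hi => [|k] hk //=.
by apply/(cellP _ _ _ dl0); rewrite -Ew nth_rnd.
Qed.

Lemma meas_rect A j : measurable A ->
  measurable (\bigcap_(i in [set` iota 0 n.+2]) (W i @^-1` Bx A j i)).
Proof.
move=> mA; apply: bigcap_measurable.
  by exists 0%N; apply: in_iota_set.
case=> [|k] _ /=; first exact: measurable_funPTI.
apply: measurable_funPTI; exact: measurable_itv.
Qed.

Lemma prod_rect A j : measurable A -> P (\bigcap_(i in [set` iota 0 n.+2]) (W i @^-1` Bx A j i)) =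
  (P (X1 @^-1` A) * \prod_(i <- iota 1 n.+1) P (W i @^-1` Bx setT j i))%E.
Proof.
move=> mA.
have HB : forall i, measurable (Bx A j i) by case=> [|k] //=; exact: measurable_itv.
have -> := indep (iota 0 n.+2) (Bx A j) (iota_uniq 0 n.+2) HB.
rewrite [iota 0 n.+2]/= big_cons /=; congr (_ * _)%E.
apply: eq_big_seq => -[|k] //; by rewrite ?inE mem_iota.
Qed.


Definition Ej j := rnd @^-1` [set j].

Lemma meas_Ej j : measurable (Ej j).
Proof.
have := meas_rect setT j measurableT.
by rewrite rect_eq preimage_setT setTI.
Qed.

Lemma indep_Ej A j : measurable A ->
  P (X1 @^-1` A `&` Ej j) = (P (X1 @^-1` A) * P (Ej j))%E.
Proof.
move=> mA; rewrite /Ej -rect_eq prod_rect //.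
have := prod_rect setT j measurableT.
by rewrite rect_eq preimage_setT setTI probability_setT mul1e => <-.
Qed.

Variable C : (n.+1).-tuple 'I_M -> R.
Hypothesis HC : forall w,
  st n.+1 w = a ^+ n.+1 * X1 w + sf (fun k => Z k w) n - C (hq n w).

Let p := a ^+ n.+1.
Let p0 : 0 < p.
Proof. by rewrite exprn_gt0 // (lt_le_trans ltr01). Qed.

Definition lo (j : (n.+1).-tuple int) k := (nth 0 j k)%:~R * dl.
Definition Jt j t : set R :=
  [set` Interval (BLeft ((c - sf (lo j) n - 1 + C t) / p))
                 (BRight ((e - sf (lo j) n + C t) / p))].
Let Tq := (n.+1).-tuple 'I_M.
Let t0 : Tq := [tuple f 0%N [tuple 0] | _ < n.+1].
Definition Aj j := \bigcup_(i < #|{: Tq}|) Jt j (nth t0 (enum {: Tq}) i).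

Lemma meas_Aj j : measurable (Aj j).
Proof. by apply: bigcup_measurable => k _; exact: measurable_itv. Qed.

Lemma leb_J j t : (lebesgue_measure (Jt j t) <= ((`|e - c| + 1) / p)%:E)%E.
Proof.
rewrite /Jt lebesgue_measure_itv /=.
case: ifP => _; last by rewrite lee_fin divr_ge0 // ?ltW // addr_ge0.
rewrite -EFinD lee_fin -mulrBl; apply: ler_wpM2r; first by rewrite invr_ge0 ltW.
have := ler_norm (e - c); lra.
Qed.

Lemma leb_Aj j : (lebesgue_measure (Aj j) <= (M%:R ^+ n.+1 * ((`|e - c| + 1) / p))%:E)%E.
Proof.
rewrite /Aj bigcup_mkord.
have B := @Boole_inequality _ _ _ lebesgue_measure (fun i => Jt j (nth t0 (enum {: Tq}) i)) #|{: Tq}| (fun i _ => measurable_itv _).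
apply: (le_trans B).
have B2 : (\sum_(i < #|{: Tq}|) lebesgue_measure (Jt j (nth t0 (enum {: Tq}) i)) <=
   \sum_(i < #|{: Tq}|) ((`|e - c| + 1) / p)%:E)%E by apply: lee_sum => i _; exact: leb_J.
apply: (le_trans B2).
by rewrite sumEFin sumr_const card_ord card_tuple card_ord -[X in (X%:E <= _)%E]mulr_natl natrX.
Qed.

Lemma cover w : [set` Interval (BLeft c) (BRight e)] (st n.+1 w) -> Aj (rnd w) (X1 w).
Proof.
rewrite /= in_itv /= => /andP[h1 h2].
have H := HC w.
have hb := sf_bound (fun k => Z k w) (lo (rnd w)) dl n (le_trans ler01 a1).
have {hb} /andP[hb1 hb2] : sf (lo (rnd w)) n <= sf (fun k => Z k w) n <= sf (lo (rnd w)) n + dl * af n.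
  apply: hb => k hk; rewrite /lo nth_rnd //.
  have /andP[l1 l2] := floor_itv (Z k w / dl).
  apply/andP; split; first by rewrite -ler_pdivlMr.
  have l3 : Z k w < (Num.floor (Z k w / dl) + 1)%:~R * dl by rewrite -ltr_pdivrMr.
  by rewrite intrD mulrDl mul1r in l3; exact: ltW.
rewrite dlaf in hb2.
exists (index (hq n w) (enum {: Tq})).
  by rewrite /= cardE index_mem mem_enum.
rewrite nth_index ?mem_enum // /Jt /= in_itv /=.
rewrite ler_pdivrMr // ler_pdivlMr // [X1 w * _]mulrC.
rewrite -/p in H.
apply/andP; split; lra.
Qed.

Lemma bound (eta : R) : 0 <= eta ->
  (forall A, measurable A ->
     (lebesgue_measure A <= (M%:R ^+ n.+1 * ((`|e - c| + 1) / p))%:E)%E ->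
     (P (X1 @^-1` A) <= eta%:E)%E) ->
  (P (st n.+1 @^-1` [set` Interval (BLeft c) (BRight e)]) <= eta%:E)%E.
Proof.
move=> eta0 Hab.
pose Fm m := if pickle_inv m is Some j then X1 @^-1` Aj j `&` Ej j else set0.
pose Em m := if pickle_inv m is Some j then Ej j else set0.
have mFm : forall m, measurable (Fm m).
  move=> m; rewrite /Fm; case: pickle_inv => [j|//].
  apply: measurableI; last exact: meas_Ej.
  apply: measurable_funPTI; exact: meas_Aj.
have mEm : forall m, measurable (Em m).
  by move=> m; rewrite /Em; case: pickle_inv => [j|//]; exact: meas_Ej.
have cov : st n.+1 @^-1` [set` Interval (BLeft c) (BRight e)] `<=` \bigcup_m Fm m.
  move=> w hw; exists (pickle (rnd w)) => //; rewrite /Fm pickleK_inv; split => //.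
  exact: cover.
have B1 : (P (st n.+1 @^-1` [set` Interval (BLeft c) (BRight e)]) <= \sum_(0 <= m <oo) P (Fm m))%E.
  apply: (measure_sigma_subadditive P); [exact: mFm | exact: meas_st; exact: measurable_itv | exact: cov].
apply: (le_trans B1).
have B2 : (\sum_(0 <= m <oo) P (Fm m) <= \sum_(0 <= m <oo) (eta%:E * P (Em m)))%E.
  apply: lee_nneseries; first by move=> *; exact: measure_ge0.
  move=> m _; rewrite /Fm /Em; case: pickle_inv => [j|]; last by rewrite measure0 mule0.
  rewrite indep_Ej; last exact: meas_Aj.
  apply: lee_pmul => //; try exact: measure_ge0.
  exact: Hab (meas_Aj j) (leb_Aj j).
apply: (le_trans B2).
rewrite nneseriesZl; last by move=> *; exact: measure_ge0.
rewrite -measure_semi_bigcup //; first last.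
- exact: bigcup_measurable.
- move=> i k _ _ [w [Ei Ek]]; move: Ei Ek; rewrite /Em.
  case Hi: (pickle_inv i) => [ji|] //; case Hk: (pickle_inv k) => [jk|] //.
  rewrite /Ej /= => E1 E2.
  have := @pickle_invK ((n.+1).-tuple int) i; rewrite Hi /= => <-.
  have := @pickle_invK ((n.+1).-tuple int) k; rewrite Hk /= => <-.
  by rewrite -E1 -E2.
rewrite -[X in (_ <= X)%E]mule1; apply: lee_pmul => //; try exact: measure_ge0; try by rewrite lee_fin.
by apply: probability_le1; exact: bigcup_measurable.
Qed.

End FixN.

End Ctx.

Lemma itv_sub (R : realType) (b1 b2 : bool) (c e : R) :
  [set` Interval (BSide b1 c) (BSide b2 e)] `<=` [set` Interval (BLeft c) (BRight e)].
Proof.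
move=> x /=; rewrite !in_itv /=; case: b1; case: b2 => /= /andP[h1 h2];
  apply/andP; split => //; exact: ltW.
Qed.

Theorem theorem3 (d : measure_display) (T : measurableType d) (R : realType)
  (P : probability T R) (a : R) (X1 : {RV P >-> R}) (Z : nat -> {RV P >-> R})
  (M : nat)
  (f : forall n : nat, (n.+1).-tuple R -> 'I_M)
  (g : forall n : nat, (n.+1).-tuple 'I_M -> R) :
  1 <= a ->
  mutually_independent P (fun i => if i is k.+1 then (Z k : T -> R) else X1) ->
  has_density P X1 ->
  (forall n, measurable_encoder (f n)) ->
  (exists (b1 b2 : bool) (c e : R),
      (0 < limn_esup (fun n =>
         P (state a f g X1 (fun k => Z k) n @^-1`
              [set` Interval (BSide b1 c) (BSide b2 e)])))%E) ->
  Num.ceil a <= M%:Z.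
Proof.
move=> a1 indep [fd [mfd [fd0 hfd]]] fm [b1 [b2 [c [e Hpos]]]].
rewrite ceil_le_int leNgt; apply/negP => aM.
have aM' : M%:R < a by [].
have a0 : 0 < a by rewrite (lt_le_trans ltr01).
have intf : lebesgue_measure.-integrable setT (EFin \o fd).
  apply/integrableP; split; first exact/measurable_EFinP.
  have -> : (\int[lebesgue_measure]_(x in setT) `|(EFin \o fd) x| =
      \int[lebesgue_measure]_(x in setT) (fd x)%:E)%E.
    by apply: eq_integral => x _; rewrite /= ?gee0_abs ?ger0_norm ?lee_fin.
  by rewrite -hfd // preimage_setT probability_setT ltry.
set u := (fun n => _ : \bar R) in Hpos.
suff : (limn_esup u <= 0)%E by rewrite leNgt Hpos.
apply/lee_addgt0Pr => eps eps0; rewrite add0e.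
have [da [da0 Hda]] := integral_normr_continuous intf eps0.
have HA : forall A, measurable A -> (lebesgue_measure A < da%:E)%E ->
    (P (X1 @^-1` A) <= eps%:E)%E.
  move=> A mA hA.
  have hv : (\int[lebesgue_measure]_(x in A) (`|fd x|)%:E)%E = P (X1 @^-1` A).
    by rewrite hfd //; apply: eq_integral => x _; rewrite ger0_norm.
  have fin : P (X1 @^-1` A) \is a fin_num.
    by apply: fin_num_measure; exact: measurable_funPTI.
  rewrite -hv -[X in (X <= _)%E]fineK; last by rewrite hv.
  by rewrite lee_fin; apply: ltW; exact: (Hda A mA hA).
set L := `|e - c| + 1.
have L0 : 0 < L by rewrite /L ltr_pwDr.
set r := M%:R / a.
have r0 : 0 <= r by rewrite divr_ge0 // ltW.
have r1 : `|r| < 1 by rewrite ger0_norm // ltr_pdivrMr // mul1r.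
have := @cvgr0_norm_lt _ _ _ _ _ (fun n => r ^+ n) (cvg_expr r1) _ (divr_gt0 da0 L0).
case=> N _ HN.
have key : forall n, (N <= n)%N -> (u n.+1 <= eps%:E)%E.
  move=> n Nn.
  have [C HC] := closed _ _ _ _ a X1 Z M f g n.
  have sub := itv_sub R b1 b2 c e.
  apply: (@le_trans _ _ (P (st d T R P a X1 Z M f g n.+1 @^-1` [set` Interval (BLeft c) (BRight e)]))).
    apply: (le_measure P); rewrite ?inE.
    - exact: (meas_st _ _ _ _ a X1 Z M f g fm n.+1 _ (measurable_itv _)).
    - exact: (meas_st _ _ _ _ a X1 Z M f g fm n.+1 _ (measurable_itv _)).
    - move=> w /=; exact: sub.
  apply: (bound _ _ _ _ a X1 Z M f g fm a1 indep n c e C HC eps (ltW eps0)).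
  move=> A mA hA; apply: HA mA _; apply: (le_lt_trans hA); rewrite lte_fin.
  have := HN n.+1 (leqW Nn); rewrite /= ger0_norm ?exprn_ge0 //.
  rewrite ltr_pdivlMr // => hr.
  have -> : M%:R ^+ n.+1 * (L / a ^+ n.+1) = r ^+ n.+1 * L.
    rewrite /r exprMn exprVn; ring.
  exact: hr.
rewrite limn_esup_lim.
have h := @cvg_esups_inf R u.
rewrite (cvg_lim _ h) //.
apply: le_trans (ereal_inf_lbound _ ) _; first by exists N.+1.
apply: ge_ereal_sup => _ [m /= Nm <-].
by case: m Nm => // m Nm; exact: key.
Qed.
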